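(* Under any CLC choice model, for every seller $i\in\mathcal N$ and price $p_i$, the revenue $R_i(p_i,\mathbf p_{-i})$ is non-decreasing in $\mathbf p_{-i}$: if $\mathbf p'_{-i}\ge\mathbf p_{-i}$ componentwise, then $R_i(p_i,\mathbf p'_{-i})\ge R_i(p_i,\mathbf p_{-i})$.
   Context: CLC setup. There are $N$ sellers $\mathcal N=\{1,\dots,N\}$, each selling one item, and a unit mass of customers, each buying at most one item. Items have a price attribute (indexed $0$) and $K$ non-price attributes indexed by $\mathcal A=\{1,\dots,K\}$; $\bar{\mathcal A}=\{0\}\cup\mathcal A$. Non-price attribute $k$ takes values in an arbitrary set $\mathcal V^k$; prices lie in $\mathcal V=[0,\bar v]$ for a fixed $\bar v>0$. Seller $i$'s item has fixed non-price attribute values $v_i^k\in\mathcal V^k$ and price $p_i\in\mathcal V$ chosen by seller $i$; $\mathbf p=(p_1,\dots,p_N)$, and $v_i^0:=p_i$. Each customer $c$ has: a strict total order $\succ_c$ on $\bar{\mathcal A}$ (attribute importance); for each attribute $k$ a complete transitive weak preference $\succsim_c^k$ on its value set, with strict part $\succ_c^k$ and indifference $\sim_c^k$ (and $v\sim_c^k v$), where for price $p\succ_c^0p'$ iff $p<p'$ and $p\sim_c^0p'$ iff $p=p'$; a willingness-to-pay $w_c\in[0,\bar v]$; a set $\mathcal C_c\subseteq\mathcal V^1\times\cdots\times\mathcal V^K$ of admissible non-price attribute vectors; and a strict tie-breaking order over sellers. Customer $c$ lexicographically prefers item $i$ to item $j$ if there is an attribute $k$ with $v_i^{k'}\sim_c^{k'}v_j^{k'}$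 for all $k'\succ_c k$ and $v_i^k\succ_c^k v_j^k$; if no such $k$ exists, the tie-breaking order decides. Under the Consider-then-Choose with Lexicographic Choice (CLC) model, customer $c$ forms the consideration set $\mathcal N_c=\{i\in\mathcal N: p_i\le w_c,\ (v_i^1,\dots,v_i^K)\in\mathcal C_c\}$, buys nothing if it is empty, and otherwise buys the top-ranked item of $\mathcal N_c$ under this lexicographic order (with tie-breaking). An instance of CLC choice is a joint distribution $\mathcal G$ of these customer primitives; the conditional distribution of $w_c$ given the other primitives is assumed to have a Lipschitz continuous density. $D_i(\mathbf p)$ is the probability a customer buys from seller $i$ and $R_i(\mathbf p)=p_iD_i(\mathbf p)$ is seller $i$'s revenue, also written $R_i(p_i,\mathbf p_{-i})$. *)

(* Defs.v *)
From HB Require Import structures.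
From mathcomp Require Import all_boot all_order all_algebra all_fingroup.
From mathcomp Require Import all_classical all_reals all_analysis.
Set Implicit Arguments. Unset Strict Implicit. Unset Printing Implicit Defensive.
Import Order.TTheory GRing.Theory Num.Theory.
Local Open Scope ring_scope.
Local Open Scope classical_set_scope.

(* Sellers: 'I_N.  Non-price attributes: 'I_K with value sets Vk k.
   Full attribute set {0} U {1..K}: 'I_K.+1, index 0 = price,
   index (lift ord0 k) = non-price attribute k. *)

Section CLC.
Variables (R : realType) (N K : nat) (Vk : 'I_K -> Type) (T : Type).

Record CLCprims := {
  imp : T -> 'I_K.+1 -> 'I_K.+1 -> Prop;           (* imp t a b : a more important than b *)
  pref : T -> forall k : 'I_K, Vk k -> Vk k -> Prop;
  wtp : T -> R;                                     (* willingness to pay *)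
  adm : T -> (forall k : 'I_K, Vk k) -> Prop;
  tb : T -> 'I_N -> 'I_N -> Prop                    (* tb t i j : i ranked before j *)
}.

Definition strict_total_order (X : Type) (r : X -> X -> Prop) :=
  [/\ forall x, ~ r x x,
      forall x y z, r x y -> r y z -> r x z &
      forall x y, x <> y -> r x y \/ r y x].

Definition weak_order (X : Type) (r : X -> X -> Prop) :=
  (forall x y, r x y \/ r y x) /\ (forall x y z, r x y -> r y z -> r x z).

Definition CLC_wf (vbar : R) (G : CLCprims) :=
  forall t : T,
  [/\ strict_total_order (imp G t),
      forall k, weak_order (@pref G t k),
      0 <= wtp G t <= vbar &
      strict_total_order (tb G t)].

Variable G : CLCprims.
(* fixed non-price attributes of the sellers' items *)
Variable vals : 'I_N -> forall k : 'I_K, Vk k.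

Definition attr_weak (t : T) (p : 'I_N -> R) (a : 'I_K.+1) (i j : 'I_N) : Prop :=
  match unlift ord0 a with
  | None => p i <= p j
  | Some k => @pref G t k (vals i k) (vals j k)
  end.

Definition attr_strict t p a i j := attr_weak t p a i j /\ ~ attr_weak t p a j i.
Definition attr_indiff t p a i j := attr_weak t p a i j /\ attr_weak t p a j i.

Definition lex_pref (t : T) (p : 'I_N -> R) (i j : 'I_N) : Prop :=
  (exists a, (forall a', imp G t a' a -> attr_indiff t p a' i j)
             /\ attr_strict t p a i j)
  \/ ((forall a, attr_indiff t p a i j) /\ tb G t i j).

Definition considered (t : T) (p : 'I_N -> R) (i : 'I_N) : Prop :=
  p i <= wtp G t /\ adm G t (vals i).

Definition buys (t : T) (p : 'I_N -> R) (i : 'I_N) : Prop :=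
  considered t p i /\ forall j, j <> i -> considered t p j -> lex_pref t p i j.

End CLC.

Definition valid_prices (R : realType) (N : nat) (vbar : R) (p : 'I_N -> R) :=
  forall j, 0 <= p j <= vbar.

Definition demand (R : realType) (N K : nat) (Vk : 'I_K -> Type)
  (d : measure_display) (T : measurableType d) (P : probability T R)
  (G : CLCprims R N Vk T) (vals : 'I_N -> forall k : 'I_K, Vk k)
  (i : 'I_N) (p : 'I_N -> R) : R :=
  fine (P [set t | buys G vals t p i]).

Definition revenue (R : realType) (N K : nat) (Vk : 'I_K -> Type)
  (d : measure_display) (T : measurableType d) (P : probability T R)
  (G : CLCprims R N Vk T) (vals : 'I_N -> forall k : 'I_K, Vk k)
  (i : 'I_N) (p : 'I_N -> R) : R :=
  p i * demand P G vals i p.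

(* Main.v *)
Require Import Defs.
From HB Require Import structures.
From mathcomp Require Import all_boot all_order all_algebra all_fingroup.
From mathcomp Require Import all_classical all_reals all_analysis.
Import Order.TTheory GRing.Theory Num.Theory.
Local Open Scope ring_scope.
Local Open Scope classical_set_scope.

Lemma attr_weak_np (R : realType) (N K : nat) (Vk : 'I_K -> Type) (T : Type)
  (G : CLCprims R N Vk T) vals t (p q : 'I_N -> R) a x y :
  a <> ord0 -> attr_weak G vals t p a x y = attr_weak G vals t q a x y.
Proof.
move=> ha; rewrite /attr_weak; case: (unliftP ord0 a) => [k _|e] //.
Qed.

Lemma buys_mono (R : realType) (N K : nat) (Vk : 'I_K -> Type) (T : Type)
  (vbar : R) (G : CLCprims R N Vk T) (hG : CLC_wf vbar G) vals
  (i : 'I_N) (p p' : 'I_N -> R)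
  (hi : p' i = p i) (hle : forall j, j <> i -> p j <= p' j) t :
  buys G vals t p i -> buys G vals t p' i.
Proof.
case: (hG t) => [[irr tr tot] _ _ _].
move=> [[hc ha] hb]; split; first by split; rewrite ?hi.
move=> j hji [hcj haj].
have hpj := hle j hji.
have := hb j hji (conj (le_trans hpj hcj) haj).
have np : forall a x y, a <> ord0 ->
   attr_weak G vals t p' a x y = attr_weak G vals t p a x y.
  by move=> a x y; apply: attr_weak_np.
have price : forall q : 'I_N -> R, forall x y,
   attr_weak G vals t q ord0 x y = (q x <= q y).
  by move=> q x y; rewrite /attr_weak unlift_none.
have [eqj|ltj] := eqVneq (p' j) (p j).
  have ew : forall a x y, x \in [:: i; j] -> y \in [:: i; j] ->
     attr_weak G vals t p' a x y = attr_weak G vals t p a x y.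
    move=> a x y hx hy; have [->|hA0] := eqVneq a ord0.
      rewrite !price.
      by move: hx hy; rewrite !inE => /orP[]/eqP-> /orP[]/eqP->;
         rewrite ?hi ?eqj.
    by apply: np; apply/eqP.
  have ei : forall a, attr_indiff G vals t p' a i j = attr_indiff G vals t p a i j.
    by move=> a; rewrite /attr_indiff !ew ?inE ?eqxx ?orbT.
  have es : forall a, attr_strict G vals t p' a i j = attr_strict G vals t p a i j.
    by move=> a; rewrite /attr_strict !ew ?inE ?eqxx ?orbT.
  rewrite /lex_pref; case=> [[a [h1 h2]]|[h1 h2]].
    by left; exists a; rewrite es; split=> // a' /h1; rewrite ei.
  by right; split=> // a; rewrite ei.
have ltpj : p j < p' j by rewrite lt_neqAle eq_sym ltj hpj.
have ni : forall a, a <> ord0 ->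
   attr_indiff G vals t p' a i j <-> attr_indiff G vals t p a i j.
  by move=> a Ha; rewrite /attr_indiff !np.
have ns : forall a, a <> ord0 ->
   attr_strict G vals t p' a i j <-> attr_strict G vals t p a i j.
  by move=> a Ha; rewrite /attr_strict !np.
have ne0 : forall a', imp G t a' ord0 -> a' <> ord0.
  by move=> a' h e; rewrite e in h; exact: (irr _ h).
have w0 : p i <= p j ->
    (forall a', imp G t a' ord0 -> attr_indiff G vals t p a' i j) ->
    lex_pref G vals t p' i j.
  move=> hij hab; left; exists ord0; split.
    by move=> a' h; apply/(ni a' (ne0 _ h)); apply: hab.
  rewrite /attr_strict !price hi; split; first exact: (le_trans hij hpj).
  by apply/negP; rewrite -ltNge; exact: (le_lt_trans hij ltpj).
rewrite /lex_pref; case=> [[a [h1 h2]]|[h1 h2]]; last first.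
  apply: w0; first by have := (h1 ord0).1; rewrite price.
  by move=> a' _; apply: h1.
have [ea|nea] := eqVneq a ord0.
  subst a; apply: w0; first by have := h2.1; rewrite price.
  exact: h1.
have nea' : a <> ord0 by apply/eqP.
case: (tot a ord0 nea') => h.
  left; exists a; split; last by apply/ns.
  move=> a' ha'; have na' : a' <> ord0.
    by move=> e; rewrite e in ha'; exact: (irr _ (tr _ _ _ ha' h)).
  by apply/ni => //; apply: h1.
apply: w0.
  by have := (h1 _ h).1; rewrite price.
by move=> a' ha'; apply: h1; exact: (tr _ _ _ ha' h).
Qed.

Theorem propositionB1 (R : realType) (N K : nat) (Vk : 'I_K -> Type)
  (d : measure_display) (T : measurableType d) (P : probability T R)
  (vbar : R) (hvbar : 0 < vbar)
  (G : CLCprims R N Vk T) (hG : CLC_wf vbar G)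
  (vals : 'I_N -> forall k : 'I_K, Vk k)
  (hmeas : forall (q : 'I_N -> R) (j : 'I_N), valid_prices vbar q ->
             measurable [set t | buys G vals t q j])
  (i : 'I_N) (p p' : 'I_N -> R)
  (hp : valid_prices vbar p) (hp' : valid_prices vbar p')
  (hi : p' i = p i)
  (hle : forall j, j <> i -> p j <= p' j) :
  revenue P G vals i p <= revenue P G vals i p'.
Proof.
rewrite /revenue /demand hi; apply: ler_wpM2l; first by case/andP: (hp i).
have m1 := hmeas p i hp; have m2 := hmeas p' i hp'.
apply: fine_le; rewrite ?inE; try exact: fin_num_measure.
apply: le_measure; rewrite ?inE //.
move=> t /= Hb.
exact: (@buys_mono R N K Vk T vbar G hG vals i p p' hi hle t Hb).
Qed.
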